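(* Let $\mathfrak{S}=(\mathcal{X},\mathsf{S},\gamma,(\Lambda_{a})_{a\in\mathcal{A}})$ be a spectral decomposition system for the Euclidean space $\mathfrak{H}$, let $\varphi\colon\mathcal{X}\to\left]-\infty,+\infty\right]$ be proper and $\mathsf{S}$-invariant, and let $X\in\mathfrak{H}$. Then: (i) for every $Y\in\mathfrak{H}$, $Y\in\partial(\varphi\circ\gamma)(X)$ if and only if $\gamma(Y)\in\partial\varphi(\gamma(X))$ and there exists $a\in\mathcal{A}$ such that $X=\Lambda_a\gamma(X)$ and $Y=\Lambda_a\gamma(Y)$; (ii) $\partial(\varphi\circ\gamma)(X)=\{\Lambda_ay: y\in\partial\varphi(\gamma(X)),\ a\in\mathcal{A}_X\}$; (iii) $\partial(\varphi\circ\gamma)(X)$ is a singleton if and only if $\partial\varphi(\gamma(X))$ is a singleton.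
   Context: A Euclidean space is a finite-dimensional real inner product space; inner products are written $\langle\cdot,\cdot\rangle$ and norms $\|\cdot\|$. Let $\mathfrak{H}$ and $\mathcal{X}$ be Euclidean spaces, let $\mathsf{S}$ be a group acting on $\mathcal{X}$ by linear isometries, let $\gamma\colon\mathfrak{H}\to\mathcal{X}$, and let $(\Lambda_a)_{a\in\mathcal{A}}$ be a family of linear operators from $\mathcal{X}$ to $\mathfrak{H}$. The orbit of $x$ is $\mathsf{S}\cdot x=\{s\cdot x: s\in\mathsf{S}\}$; a map $f$ on $\mathcal{X}$ is $\mathsf{S}$-invariant if $f(s\cdot x)=f(x)$ for all $s,x$. The tuple is a spectral decomposition system for $\mathfrak{H}$ if: [A] every $\Lambda_a$ is an isometry; [B] there exists an $\mathsf{S}$-invariant $\tau\colon\mathcal{X}\to\mathcal{X}$ with $\tau(x)\in\mathsf{S}\cdot x$ for all $x$ and $\gamma\circ\Lambda_a=\tau$ for all $a$; [C] for every $X\in\mathfrak{H}$ there is $a$ with $X=\Lambda_a\gamma(X)$; [D] $\langle X,Y\rangle\leq\langle\gamma(X),\gamma(Y)\rangle$ for all $X,Y\in\mathfrak{H}$. For $X\in\mathfrak{H}$, $\mathcal{A}_X=\{a\in\mathcal{A}: X=\Lambda_a\gamma(X)\}$. A function is proper if it never takes $-\infty$ and is finite somewhere; the subdifferential of $f$ on a Euclidean space $\mathcal{H}$ is $\partial f(x)=\{y:\langle z-x,y\rangle+f(x)\leq f(z)\ \forall z\in\mathcal{H}\}$. *)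

(* Defs.v *)
From HB Require Import structures.
From mathcomp Require Import all_boot all_order all_algebra.
From mathcomp Require Import boolp classical_sets reals constructive_ereal.
Set Implicit Arguments. Unset Strict Implicit. Unset Printing Implicit Defensive.
Import Order.TTheory GRing.Theory Num.Theory.
Local Open Scope ring_scope.
Local Open Scope classical_set_scope.

(* Euclidean spaces are modelled as row spaces 'rV[R]_n with the standard
   inner product (every Euclidean space is isometric to such a space). *)
Definition dotp (R : realType) (n : nat) (u v : 'rV[R]_n) : R := (u *m v^T) 0 0.
Definition vnorm (R : realType) (n : nat) (u : 'rV[R]_n) : R := Num.sqrt (dotp u u).

Definition isometric_group_action (R : realType) (m : nat) (G : Type)
  (mulG : G -> G -> G) (oneG : G) (invG : G -> G)
  (act : G -> 'rV[R]_m -> 'rV[R]_m) : Prop :=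
  [/\ (forall g h k, mulG g (mulG h k) = mulG (mulG g h) k),
      (forall g, mulG oneG g = g /\ mulG g oneG = g)
    & (forall g, mulG (invG g) g = oneG /\ mulG g (invG g) = oneG)] /\
  [/\ (forall x, act oneG x = x),
      (forall g h x, act (mulG g h) x = act g (act h x)),
      (forall g (c : R) x y, act g (c *: x + y) = c *: act g x + act g y)
    &
      (forall g x, vnorm (act g x) = vnorm x)].

Definition orbit (R : realType) (m : nat) (G : Type)
  (act : G -> 'rV[R]_m -> 'rV[R]_m) (x : 'rV[R]_m) : set 'rV[R]_m :=
  [set act g x | g in [set: G]].

Definition S_invariant (R : realType) (m : nat) (G : Type) (T : Type)
  (act : G -> 'rV[R]_m -> 'rV[R]_m) (f : 'rV[R]_m -> T) : Prop :=
  forall g x, f (act g x) = f x.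

Definition spectral_decomposition_system (R : realType) (n m : nat) (G : Type)
  (mulG : G -> G -> G) (oneG : G) (invG : G -> G)
  (act : G -> 'rV[R]_m -> 'rV[R]_m)
  (gamma : 'rV[R]_n -> 'rV[R]_m) (A : Type) (Lam : A -> 'rV[R]_m -> 'rV[R]_n) : Prop :=
  isometric_group_action mulG oneG invG act /\
  (forall a (c : R) x y, Lam a (c *: x + y) = c *: Lam a x + Lam a y) /\
  [/\
      (forall a x, vnorm (Lam a x) = vnorm x),
      (exists tau : 'rV[R]_m -> 'rV[R]_m,
         [/\ S_invariant act tau,
             (forall x, orbit act x (tau x))
           & (forall a x, gamma (Lam a x) = tau x)]),
      (forall X, exists a, X = Lam a (gamma X))
    &
      (forall X Y, dotp X Y <= dotp (gamma X) (gamma Y))].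

Definition A_of (R : realType) (n m : nat) (gamma : 'rV[R]_n -> 'rV[R]_m)
  (A : Type) (Lam : A -> 'rV[R]_m -> 'rV[R]_n) (X : 'rV[R]_n) : set A :=
  [set a | X = Lam a (gamma X)].

Definition proper_fun (R : realType) (m : nat) (f : 'rV[R]_m -> \bar R) : Prop :=
  (forall x, f x <> -oo%E) /\ exists x (r : R), f x = r%:E.

Definition subdiff (R : realType) (k : nat) (f : 'rV[R]_k -> \bar R) (x : 'rV[R]_k)
  : set 'rV[R]_k :=
  [set y | forall z, ((dotp (z - x) y)%:E + f x <= f z)%E].

(* Main.v *)
Require Import Defs.
From mathcomp Require Import all_boot all_order all_algebra.
From mathcomp Require Import boolp classical_sets reals constructive_ereal.
From mathcomp Require Import ring lra.
Import Order.TTheory GRing.Theory Num.Theory.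
Local Open Scope ring_scope.

Set Implicit Arguments. Unset Strict Implicit. Unset Printing Implicit Defensive.

Lemma dotpE (R : realType) n (u v : 'rV[R]_n) : dotp u v = \sum_i u 0 i * v 0 i.
Proof. by rewrite /dotp !mxE; apply: eq_bigr => i _; rewrite mxE. Qed.

Lemma dotpC (R : realType) n (u v : 'rV[R]_n) : dotp u v = dotp v u.
Proof. by rewrite !dotpE; apply: eq_bigr => i _; rewrite mulrC. Qed.

Lemma dotpDl (R : realType) n (u v w : 'rV[R]_n) : dotp (u + v) w = dotp u w + dotp v w.
Proof. by rewrite /dotp mulmxDl mxE. Qed.

Lemma dotpZl (R : realType) n c (u w : 'rV[R]_n) : dotp (c *: u) w = c * dotp u w.
Proof. by rewrite /dotp -scalemxAl mxE. Qed.

Lemma dotpNl (R : realType) n (u w : 'rV[R]_n) : dotp (- u) w = - dotp u w.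
Proof. by rewrite -scaleN1r dotpZl mulN1r. Qed.

Lemma dotpBl (R : realType) n (u v w : 'rV[R]_n) : dotp (u - v) w = dotp u w - dotp v w.
Proof. by rewrite dotpDl dotpNl. Qed.

Lemma dotpDr (R : realType) n (u v w : 'rV[R]_n) : dotp w (u + v) = dotp w u + dotp w v.
Proof. by rewrite dotpC dotpDl !(dotpC w). Qed.

Lemma dotpBr (R : realType) n (u v w : 'rV[R]_n) : dotp w (u - v) = dotp w u - dotp w v.
Proof. by rewrite dotpC dotpBl !(dotpC w). Qed.

Lemma dotp_ge0 (R : realType) n (u : 'rV[R]_n) : 0 <= dotp u u.
Proof. by rewrite dotpE; apply: sumr_ge0 => i _; rewrite -expr2 sqr_ge0. Qed.

Lemma dotp_eq0 (R : realType) n (u : 'rV[R]_n) : dotp u u = 0 -> u = 0.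
Proof.
rewrite dotpE => /psumr_eq0P H.
have {}H := H (fun k _ => (sqr_ge0 (u 0 k) : 0 <= u 0 k * u 0 k)).
apply/matrixP => i j; rewrite ord1 mxE.
by have := H j isT; rewrite -expr2 => /eqP; rewrite sqrf_eq0 => /eqP.
Qed.

Lemma dotp_le0 (R : realType) n (u : 'rV[R]_n) : dotp u u <= 0 -> u = 0.
Proof. by move=> h; apply: dotp_eq0; apply/eqP; rewrite eq_le h dotp_ge0. Qed.

Lemma lin_sub (R : realType) n k (f : 'rV[R]_n -> 'rV[R]_k) :
  (forall (c : R) x y, f (c *: x + y) = c *: f x + f y) ->
  forall x y, f (x - y) = f x - f y.
Proof. by move=> hf x y; rewrite addrC -scaleN1r hf scaleN1r addrC. Qed.

Lemma lin_add (R : realType) n k (f : 'rV[R]_n -> 'rV[R]_k) :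
  (forall (c : R) x y, f (c *: x + y) = c *: f x + f y) ->
  forall x y, f (x + y) = f x + f y.
Proof. by move=> hf x y; have := hf 1 x y; rewrite !scale1r. Qed.

Lemma iso_dotp (R : realType) n k (f : 'rV[R]_n -> 'rV[R]_k) :
  (forall (c : R) x y, f (c *: x + y) = c *: f x + f y) ->
  (forall x, vnorm (f x) = vnorm x) ->
  forall u v, dotp (f u) (f v) = dotp u v.
Proof.
move=> hl hn.
have hs x : dotp (f x) (f x) = dotp x x.
  by have := hn x; rewrite /vnorm => /eqP; rewrite eqr_sqrt ?dotp_ge0 // => /eqP.
move=> u v; have := hs (u + v); rewrite lin_add // !dotpDl !dotpDr hs hs.
rewrite (dotpC (f v)) (dotpC v) => h; lra.
Qed.

Local Open Scope classical_set_scope.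

Theorem proposition5p5 (R : realType) (n m : nat) (G : Type)
  (mulG : G -> G -> G) (oneG : G) (invG : G -> G)
  (act : G -> 'rV[R]_m -> 'rV[R]_m)
  (gamma : 'rV[R]_n -> 'rV[R]_m) (A : Type) (Lam : A -> 'rV[R]_m -> 'rV[R]_n)
  (phi : 'rV[R]_m -> \bar R) (X : 'rV[R]_n) :
  spectral_decomposition_system mulG oneG invG act gamma Lam ->
  proper_fun phi -> S_invariant act phi ->
  [/\ (forall Y : 'rV[R]_n,
         subdiff (phi \o gamma) X Y <->
         (subdiff phi (gamma X) (gamma Y) /\
          exists a, X = Lam a (gamma X) /\ Y = Lam a (gamma Y))),
      subdiff (phi \o gamma) X =
        [set Z | exists a y, [/\ A_of gamma Lam X a, subdiff phi (gamma X) y & Z = Lam a y]]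
    & ((exists Y, subdiff (phi \o gamma) X = [set Y]) <->
       (exists y, subdiff phi (gamma X) = [set y]))].
Proof.
move=> [[[_ _ ginv] [act1 actM actL actN]] [LL [LN [tau [tauI tauO gL]] HC HD]]].
move=> [phin [x0 [r0 phx0]]] phiI.
have LD a u v : dotp (Lam a u) (Lam a v) = dotp u v := iso_dotp (LL a) (LN a) u v.
have AD g u v : dotp (act g u) (act g v) = dotp u v := iso_dotp (actL g) (actN g) u v.
have phitau x : phi (tau x) = phi x.
  by have [g _ <-] := tauO x; apply: phiI.
have phiL a x : phi (gamma (Lam a x)) = phi x by rewrite gL phitau.
have gfix Z : tau (gamma Z) = gamma Z.
  by have [a ha] := HC Z; rewrite -(gL a) -ha.
have gnorm Z : dotp (gamma Z) (gamma Z) = dotp Z Z.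
  by have [a ha] := HC Z; rewrite -(LD a) -ha.
have keyX U V c : dotp U V = dotp (gamma U) (gamma V) ->
    U + V = Lam c (gamma (U + V)) -> U = Lam c (gamma U).
  move=> hUV hc.
  have gadd : gamma (U + V) = gamma U + gamma V.
    apply/eqP; rewrite -subr_eq0; apply/eqP; apply: dotp_le0.
    have e1 := gnorm (U + V); have e2 := gnorm U; have e3 := gnorm V.
    have h1 := HD U (U + V); have h2 := HD V (U + V).
    have s1 := dotpC (gamma U) (gamma V).
    have s2 := dotpC (gamma U) (gamma (U + V)).
    have s3 := dotpC (gamma V) (gamma (U + V)).
    have s4 := dotpC U V.
    move: e1 h1 h2; rewrite !dotpBl !dotpBr !dotpDl !dotpDr => e1 h1 h2.
    lra.
  set U' := Lam c (gamma U); set V' := Lam c (gamma V).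
  have hsum : U + V = U' + V' by rewrite hc gadd lin_add.
  have gV' : gamma V' = gamma V by rewrite /V' gL gfix.
  have h1 := HD U V'; rewrite gV' in h1.
  have hU' : dotp U' U' = dotp U U by rewrite /U' LD gnorm.
  have eU' : U' = U + V - V' by rewrite hsum addrK.
  have d1 : dotp U U' = dotp U U + dotp U V - dotp U V'.
    by rewrite eU' !dotpBr !dotpDr.
  apply/eqP; rewrite -subr_eq0; apply/eqP; apply: dotp_le0.
  have s1 := dotpC U U'.
  rewrite !dotpBl !dotpBr.
  lra.
have common U V : dotp U V = dotp (gamma U) (gamma V) ->
    exists a, U = Lam a (gamma U) /\ V = Lam a (gamma V).
  move=> hUV; have [c hc] := HC (U + V); exists c; split; first exact: keyX hc.
  apply: (keyX V U c); first by rewrite dotpC hUV dotpC.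
  by rewrite addrC.
have [a0 ha0] := HC X.
have fin Y : subdiff (phi \o gamma) X Y -> exists fX : R, phi (gamma X) = fX%:E.
  move=> hY; have := hY (Lam a0 x0); rewrite /= phiL phx0.
  case: (phi (gamma X)) (phin (gamma X)) => [f| |] //; first by exists f.
have partI Y : subdiff (phi \o gamma) X Y <->
         (subdiff phi (gamma X) (gamma Y) /\
          exists a, X = Lam a (gamma X) /\ Y = Lam a (gamma Y)).
  split.
    move=> hY; have [fX hfX] := fin Y hY.
    have [b hb] := HC Y.
    have e : dotp (Lam b (gamma X)) Y = dotp (gamma X) (gamma Y).
      by rewrite {1}hb LD.
    have hXY : dotp X Y = dotp (gamma X) (gamma Y).
      have := hY (Lam b (gamma X)); rewrite /= phiL hfX -EFinD lee_fin dotpBl e.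
      have := HD X Y; lra.
    have [a [haX haY]] := common X Y hXY.
    split; last by exists a.
    move=> z; have := hY (Lam a z); rewrite /= phiL.
    have -> : dotp (Lam a z - X) Y = dotp (z - gamma X) (gamma Y).
      by rewrite {1}haX {1}haY -(lin_sub (LL a)) LD.
    by [].
  move=> [hy [a [haX haY]]] Z /=.
  have le : dotp (Z - X) Y <= dotp (gamma Z - gamma X) (gamma Y).
    have e : dotp X Y = dotp (gamma X) (gamma Y) by rewrite {1}haX {1}haY LD.
    rewrite !dotpBl e; have := HD Z Y; lra.
  apply: le_trans (hy (gamma Z)); apply: leeD2r; by rewrite lee_fin.
have sup a y : A_of gamma Lam X a -> subdiff phi (gamma X) y ->
    subdiff (phi \o gamma) X (Lam a y).
  move=> ha hy W /=.
  have [g _ hg] := tauO y.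
  have hgi : act g (act (invG g) (gamma W)) = gamma W.
    by rewrite -actM (proj2 (ginv g)) act1.
  have le : dotp (W - X) (Lam a y) <= dotp (act (invG g) (gamma W) - gamma X) y.
    have e1 : dotp X (Lam a y) = dotp (gamma X) y by rewrite {1}ha LD.
    have e2 : dotp (gamma W) (gamma (Lam a y)) = dotp (act (invG g) (gamma W)) y.
      by rewrite gL -hg -{1}hgi AD.
    rewrite !dotpBl e1 -e2; have := HD W (Lam a y); lra.
  have := hy (act (invG g) (gamma W)); rewrite phiI; apply: le_trans.
  apply: leeD2r; by rewrite lee_fin.
have partII : subdiff (phi \o gamma) X =
        [set Z | exists a y, [/\ A_of gamma Lam X a, subdiff phi (gamma X) y & Z = Lam a y]].
  apply/seteqP; split => Z.
    move=> /partI [hy [a [haX haZ]]]; exists a, (gamma Z); split => //.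
  by move=> [a [y [ha hy ->]]]; apply: sup.
have Linj a u v : Lam a u = Lam a v -> u = v.
  move=> h; apply/eqP; rewrite -subr_eq0; apply/eqP; apply: dotp_le0.
  by rewrite -(LD a) (lin_sub (LL a)) h subrr /dotp mul0mx mxE.
split => //; split.
  move=> [Y hS]; exists (gamma Y).
  have hY : subdiff (phi \o gamma) X Y by rewrite hS.
  have [hgY _] := (partI Y).1 hY.
  have e1 : Lam a0 (gamma Y) = Y.
    by have := sup a0 (gamma Y) ha0 hgY; rewrite hS.
  apply/seteqP; split => y; last by move=> ->.
  move=> hy; have := sup a0 y ha0 hy; rewrite hS => h1.
  have h2 : Lam a0 y = Y := h1.
  change (y = gamma Y); apply: (Linj a0); by rewrite h2 e1.
move=> [y hS]; exists (Lam a0 y).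
have hLy : subdiff (phi \o gamma) X (Lam a0 y) by apply: sup => //; rewrite hS.
apply/seteqP; split => Z; last by move=> ->.
move=> hZ.
have gZ : gamma Z = y by have [+ _] := (partI Z).1 hZ; rewrite hS.
set M := (2^-1 : R) *: (Z + Lam a0 y).
have hM : subdiff (phi \o gamma) X M.
  move=> W.
  have eM : dotp (W - X) M = 2^-1 * (dotp (W - X) Z + dotp (W - X) (Lam a0 y)).
    by rewrite /M dotpC dotpZl dotpDl !(dotpC _ (W - X)).
  have [h|h] := leP (dotp (W - X) Z) (dotp (W - X) (Lam a0 y)).
    apply: le_trans (hLy W); apply: leeD2r; rewrite lee_fin eM; lra.
  apply: le_trans (hZ W); apply: leeD2r; rewrite lee_fin eM; lra.
have gM : gamma M = y by have [+ _] := (partI M).1 hM; rewrite hS.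
have nM := gnorm M; have nZ := gnorm Z; have nL := LD a0 y y.
rewrite gM in nM; rewrite gZ in nZ.
have eMM : dotp M M = 4^-1 * (dotp Z Z + 2 * dotp Z (Lam a0 y) + dotp (Lam a0 y) (Lam a0 y)).
  rewrite /M dotpZl dotpC dotpZl !dotpDl !dotpDr (dotpC (Lam a0 y) Z).
  by field.
change (Z = Lam a0 y); apply/eqP; rewrite -subr_eq0; apply/eqP; apply: dotp_le0.
rewrite !dotpBl !dotpBr (dotpC (Lam a0 y) Z); lra.
Qed.
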